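(* For all integers $k\ge1$ and generic $a,b,c$, the polynomials $Q_k^{(2)}(n;a;b,c)=\sum_{j=0}^k\frac{(-n)_j(n+a)_j(-k)_j}{j!(b)_j(c)_j}$ satisfy $$abc\,\frac{n+\frac a2}{\frac a2}\,Q_k^{(2)}(n;a;b,c)=(n+a)(n+b)(n+c)\,Q_{k-1}^{(2)}(n;a+1;b+1,c+1)+n(n+a-b)(n+a-c)\,Q_{k-1}^{(2)}(n-1;a+1;b+1,c+1).$$
   Context: $(c)_n$ denotes the Pochhammer symbol, $(c)_0=1$. *)

(* Defs.v *)
From HB Require Import structures.
From mathcomp Require Import all_boot all_order all_algebra.
Set Implicit Arguments. Unset Strict Implicit. Unset Printing Implicit Defensive.
Import Order.TTheory GRing.Theory Num.Theory.
Local Open Scope ring_scope.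

Definition poch (R : ringType) (x : R) (j : nat) : R :=
  \prod_(i < j) (x + i%:R).

Definition Q2 (R : fieldType) (k : nat) (n a b c : R) : R :=
  \sum_(j < k.+1)
    (poch (- n) j * poch (n + a) j * poch (- (k%:R)) j)
      / ((j`!)%:R * poch b j * poch c j).

(* Main.v *)
Require Import Defs.
From HB Require Import structures.
From mathcomp Require Import all_boot all_order all_algebra.
From mathcomp Require Import ring lra zify.
Import Order.TTheory GRing.Theory Num.Theory.
Local Open Scope ring_scope.

Lemma poch_recr (R : ringType) (x : R) j : poch x j.+1 = poch x j * (x + j%:R).
Proof. by rewrite /poch big_ord_recr. Qed.

Lemma poch0 (R : ringType) (x : R) : poch x 0 = 1.
Proof. by rewrite /poch big_ord0. Qed.

Lemma poch_shift (R : comRingType) (x : R) j :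
  poch (x + 1) j * x = poch x j * (x + j%:R).
Proof.
elim: j => [|j IH]; first by rewrite !poch0 addr0 mul1r.
rewrite !poch_recr -natr1.
transitivity ((poch (x + 1) j * x) * (x + 1 + j%:R)); first by ring.
rewrite IH; ring.
Qed.

Lemma poch_neq0 (R : fieldType) (x : R) j :
  (forall i, (i < j)%N -> x + i%:R != 0) -> poch x j != 0.
Proof.
move=> H; rewrite /poch; apply/prodf_neq0 => i _; exact: H.
Qed.

Lemma term (R : fieldType) (hchar : [pchar R] =i pred0) (K j : nat) (hj : (j <= K)%N)
  (n a b c : R)
  (hb : forall j : nat, (j < K.+1)%N -> b + j%:R != 0)
  (hc : forall j : nat, (j < K.+1)%N -> c + j%:R != 0) :
  let T i := poch (- n) i * poch (n + a) i * poch (- ((K.+1)%:R)) i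
      / ((i`!)%:R * poch b i * poch c i) in
  (n + a) * (n + b) * (n + c) *
    (poch (- n) j * poch (n + (a + 1)) j * poch (- (K%:R)) j
      / ((j`!)%:R * poch (b + 1) j * poch (c + 1) j))
  + n * (n + a - b) * (n + a - c) *
    (poch (- (n - 1)) j * poch (n - 1 + (a + 1)) j * poch (- (K%:R)) j
      / ((j`!)%:R * poch (b + 1) j * poch (c + 1) j))
  = b * c * ((2 * n + a) * T j + (2 * n + a) / (K.+1)%:R *
        ((j.+1)%:R * T j.+1 - j%:R * T j)).
Proof.
move=> T.
have nat0 : forall m, (m.+1%:R : R) != 0.
  by move=> m; rewrite (proj1 (pcharf0P R) hchar).
have hb0 : b != 0 by have := hb 0%N isT; rewrite addr0.
have hc0 : c != 0 by have := hc 0%N isT; rewrite addr0.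
have hbj : b + j%:R != 0 by apply: hb; rewrite ltnS.
have hcj : c + j%:R != 0 by apply: hc; rewrite ltnS.
have hBj : poch b j != 0 by apply: poch_neq0 => i hi; apply: hb; lia.
have hCj : poch c j != 0 by apply: poch_neq0 => i hi; apply: hc; lia.
have hf : (j`!)%:R != 0 :> R by rewrite (proj1 (pcharf0P R) hchar) -lt0n fact_gt0.
have hK := nat0 K.
rewrite /T !poch_recr factS natrM.
rewrite (_ : n - 1 + (a + 1) = n + a); last by ring.
rewrite (_ : - (n - 1) = - n + 1); last by ring.
rewrite (_ : n + (a + 1) = n + a + 1); last by ring.
rewrite (_ : - K%:R = - (K.+1)%:R + 1); last by rewrite -natr1; ring.
have eN := poch_shift R (- n) j.
have eA := poch_shift R (n + a) j.
have eK := poch_shift R (- (K.+1)%:R) j.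
have eB := poch_shift R b j.
have eC := poch_shift R c j.
move: eN eA eK eB eC.
set X := poch (- n) j. set Y := poch (n + a) j. set Z := poch (- (K.+1)%:R) j.
set Bj := poch b j. set Cj := poch c j. set f := (j`!)%:R.
set W := poch (- n + 1) j. set V := poch (n + a + 1) j. set Z' := poch (- (K.+1)%:R + 1) j.
set B' := poch (b + 1) j. set C' := poch (c + 1) j.
move=> eN eA eK eB eC.
have -> : B' = Bj * (b + j%:R) / b by rewrite -eB mulfK.
have -> : C' = Cj * (c + j%:R) / c by rewrite -eC mulfK.
have -> : Z' = Z * (- (K.+1)%:R + j%:R) / (- (K.+1)%:R).
  by rewrite -eK mulfK // oppr_eq0.
rewrite (_ : forall P Q, (n + a) * (n + b) * (n + c) * (X * V * P * Q) + n * (n + a - b) * (n + a - c) * (W * Y * P * Q)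
   = (n + b) * (n + c) * (X * (V * (n + a)) * P * Q) - (n + a - b) * (n + a - c) * ((W * - n) * Y * P * Q)); last first.
  by move=> P Q; ring.
rewrite eA eN.
field.
by rewrite hCj hBj hf hcj hbj hb0 hc0 oppr_eq0 !(addrC 1) !natr1 !nat0.
Qed.

Theorem mainTheorem14 (R : fieldType) (hchar : [pchar R] =i pred0)
  (k : nat) (hk : (1 <= k)%N) (n a b c : R)
  (ha : a != 0)
  (hb : forall j : nat, (j < k)%N -> b + j%:R != 0)
  (hc : forall j : nat, (j < k)%N -> c + j%:R != 0) :
  a * b * c * ((n + a / 2) / (a / 2)) * Q2 k n a b c =
    (n + a) * (n + b) * (n + c) * Q2 k.-1 n (a + 1) (b + 1) (c + 1)
  + n * (n + a - b) * (n + a - c) * Q2 k.-1 (n - 1) (a + 1) (b + 1) (c + 1).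
Proof.
case: k hk hb hc => // K _ hb hc /=.
have nat0 : forall m, (m.+1%:R : R) != 0.
  by move=> m; rewrite (proj1 (pcharf0P R) hchar).
set T := fun i => poch (- n) i * poch (n + a) i * poch (- ((K.+1)%:R)) i
      / ((i`!)%:R * poch b i * poch c i).
have tel : \sum_(i < K.+1) ((i.+1)%:R * T i.+1 - i%:R * T i) = (K.+1)%:R * T K.+1 - 0%:R * T 0%N.
  by rewrite -(big_mkord xpredT (fun i => (i.+1)%:R * T i.+1 - i%:R * T i)) telescope_sumr.
rewrite /Q2 big_ord_recr /= -/(T _).
rewrite (eq_bigr (fun j : 'I_K.+1 => T j)) //.
rewrite !big_distrr -big_split /=.
rewrite [in RHS](eq_bigr (fun i : 'I_K.+1 => b * c * ((2 * n + a) * T i + (2 * n + a) / (K.+1)%:R *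
        ((i.+1)%:R * T i.+1 - i%:R * T i)))); last first.
  by move=> i _; rewrite (term _ hchar K i _ n a b c hb hc) // -ltnS.
rewrite -big_distrr /= big_split /= -!big_distrr /= tel.
move: (\sum_(i < K.+1) T i) (T K.+1) (T 0%N) => S t t0.
have h2 : (2 : R) != 0 by apply: nat0.
field.
by rewrite ha h2 !(addrC 1) !natr1 nat0.
Qed.
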